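(* Let $(\mathfrak g,J)$ be a real Lie algebra with integrable complex structure, let $(E,I)$ be a real vector space with complex structure, and let $\rho:\mathfrak g\to\operatorname{End}E$ be a representation. Then the following are equivalent: (i) $\rho$ is integrable, i.e. $\mathcal N(x):=[I,\rho(Jx)]+I[\rho(x),I]=0$ for all $x\in\mathfrak g$; (ii) for all $X\in\mathfrak g^{1,0}$ the map $\rho(X)$ has no component in $\operatorname{Hom}(E^{1,0},E^{0,1})$; (iii) $E^{1,0}$ is invariant under the action of $\mathfrak g^{1,0}$; (iv) $\rho|_{\mathfrak g^{1,0}}$ induces by restriction a $\mathbb C$-linear representation of $\mathfrak g^{1,0}$ on $E^{1,0}$.
   Context: A complex structure on a real Lie algebra $\mathfrak g$ is $J\in\operatorname{End}\mathfrak g$ with $J^2=-\mathrm{id}$ and $[x,y]-[Jx,Jy]+J[Jx,y]+J[x,Jy]=0$ for all $x,y$. $\mathfrak g_{\mathbb C}=\mathfrak g^{1,0}\oplus\mathfrak g^{0,1}$ and $E_{\mathbb C}=E^{1,0}\oplus E^{0,1}$ denote the $\pm i$-eigenspace decompositions of the $\mathbb C$-linear extensions of $J$ and $I$; $\rho$ is extended $\mathbb C$-linearly to $\mathfrak g_{\mathbb C}\to\operatorname{End}E_{\mathbb C}$. *)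

(* Defs.v *)
(* Real scalars: an arbitrary real closed field R (covers the
   reals); complex scalars: R[i] = complex R from mathcomp-real-closed. *)
From HB Require Import structures.
From mathcomp Require Import all_boot all_order all_algebra.
From mathcomp Require Import complex.
Set Implicit Arguments. Unset Strict Implicit. Unset Printing Implicit Defensive.
Import Order.TTheory GRing.Theory Num.Theory.
Local Open Scope ring_scope.

Section Defs.
Variable R : rcfType.

Definition is_lie_bracket (g : lmodType R) (br : g -> g -> g) : Prop :=
  [/\ (forall (a : R) x y z, br (a *: x + y) z = a *: br x z + br y z),
      (forall (a : R) x y z, br z (a *: x + y) = a *: br z x + br z y),
      (forall x, br x x = 0) &
      (forall x y z, br x (br y z) + br y (br z x) + br z (br x y) = 0)].

Definition is_R_linear (U V : lmodType R) (f : U -> V) : Prop :=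
  forall (a : R) x y, f (a *: x + y) = a *: f x + f y.

Definition complex_structure (V : lmodType R) (J : V -> V) : Prop :=
  is_R_linear J /\ forall x, J (J x) = - x.

Definition integrable_cs (g : lmodType R) (br : g -> g -> g) (J : g -> g) : Prop :=
  complex_structure J /\
  forall x y, br x y - br (J x) (J y) + J (br (J x) y) + J (br x (J y)) = 0.

Definition is_representation (g E : lmodType R) (br : g -> g -> g)
  (rho : g -> E -> E) : Prop :=
  [/\ (forall x, is_R_linear (rho x)),
      (forall (a : R) x y e, rho (a *: x + y) e = a *: rho x e + rho y e) &
      (forall x y e, rho (br x y) e = rho x (rho y e) - rho y (rho x e))].

Definition integrable_rep (g E : lmodType R) (J : g -> g) (I : E -> E)
  (rho : g -> E -> E) : Prop :=
  forall x e,
    (I (rho (J x) e) - rho (J x) (I e)) + I (rho x (I e) - I (rho x e)) = 0.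

(* ---------- complexification V_C = V (+) i V, modelled as pairs (u,v) = u + i v ---------- *)

Definition cpx (V : lmodType R) := (V * V)%type.

Definition cadd (V : lmodType R) (w z : cpx V) : cpx V := (w.1 + z.1, w.2 + z.2).
Definition czero (V : lmodType R) : cpx V := (0, 0).

Definition cscale (V : lmodType R) (c : R[i]) (w : cpx V) : cpx V :=
  (complex.Re c *: w.1 - complex.Im c *: w.2,
   complex.Re c *: w.2 + complex.Im c *: w.1).

Definition ci : R[i] := Complex 0 1.

Definition cext (V : lmodType R) (f : V -> V) (w : cpx V) : cpx V := (f w.1, f w.2).

Definition cbracket (g : lmodType R) (br : g -> g -> g) (w z : cpx g) : cpx g :=
  (br w.1 z.1 - br w.2 z.2, br w.1 z.2 + br w.2 z.1).

Definition crho (g E : lmodType R) (rho : g -> E -> E) (w : cpx g) (e : cpx E) : cpx E :=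
  (rho w.1 e.1 - rho w.2 e.2, rho w.1 e.2 + rho w.2 e.1).

Definition V10 (V : lmodType R) (J : V -> V) (w : cpx V) : Prop :=
  cext J w = cscale ci w.
Definition V01 (V : lmodType R) (J : V -> V) (w : cpx V) : Prop :=
  cext J w = cscale (- ci) w.

Definition proj10 (V : lmodType R) (J : V -> V) (w : cpx V) : cpx V :=
  cscale (Complex (2%:R^-1) 0) (cadd w (cscale (- ci) (cext J w))).
Definition proj01 (V : lmodType R) (J : V -> V) (w : cpx V) : cpx V :=
  cscale (Complex (2%:R^-1) 0) (cadd w (cscale ci (cext J w))).

Definition comp_10_01 (E : lmodType R) (I : E -> E) (f : cpx E -> cpx E)
  (w : cpx E) : cpx E := proj01 I (f (proj10 I w)).

End Defs.

(* Main.v *)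
Require Import Defs.
From HB Require Import structures.
From mathcomp Require Import all_boot all_order all_algebra.
From mathcomp Require Import complex.
Import Order.TTheory GRing.Theory Num.Theory.
Set Implicit Arguments. Unset Strict Implicit.
Local Open Scope ring_scope.

Lemma lin0 (R : rcfType) (U V : lmodType R) (f : U -> V) : is_R_linear f -> f 0 = 0.
Proof.
move=> Hf; have := Hf 1 0 0; rewrite scale1r addr0 scale1r => H.
by apply: (addrI (f 0)); rewrite addr0 -H.
Qed.
Lemma linD (R : rcfType) (U V : lmodType R) (f : U -> V) : is_R_linear f ->
  forall x y, f (x + y) = f x + f y.
Proof. by move=> Hf x y; have := Hf 1 x y; rewrite !scale1r. Qed.
Lemma linZ (R : rcfType) (U V : lmodType R) (f : U -> V) : is_R_linear f ->
  forall a x, f (a *: x) = a *: f x.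
Proof. by move=> Hf a x; have := Hf a x 0; rewrite !addr0 lin0 // addr0. Qed.
Lemma linN (R : rcfType) (U V : lmodType R) (f : U -> V) : is_R_linear f ->
  forall x, f (- x) = - f x.
Proof. by move=> Hf x; rewrite -scaleN1r linZ // scaleN1r. Qed.
Lemma linB (R : rcfType) (U V : lmodType R) (f : U -> V) : is_R_linear f ->
  forall x y, f (x - y) = f x - f y.
Proof. by move=> Hf x y; rewrite linD // linN. Qed.

Lemma V10P (R : rcfType) (V : lmodType R) (J : V -> V) (w : cpx V) :
  complex_structure J -> V10 J w <-> w.2 = - J w.1.
Proof.
case: w => a b [HJ JJ]; rewrite /V10 /cext /cscale /=.
rewrite !scale0r !scale1r sub0r add0r; split.
  by move=> H; have := congr1 fst H => /= ->; rewrite opprK.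
by move=> ->; rewrite (linN HJ) JJ !opprK.
Qed.

Definition Nmap (R : rcfType) (g E : lmodType R) (J : g -> g) (I : E -> E)
  (rho : g -> E -> E) x e :=
  (I (rho (J x) e) - rho (J x) (I e)) + I (rho x (I e) - I (rho x e)).

Definition Kmap (R : rcfType) (g E : lmodType R) (J : g -> g) (I : E -> E)
  (rho : g -> E -> E) x u :=
  (crho rho (x, - J x) (u, - I u)).2 + I (crho rho (x, - J x) (u, - I u)).1.

Lemma KN (R : rcfType) (g E : lmodType R) (J : g -> g) (I : E -> E)
  (rho : g -> E -> E) :
  complex_structure I ->
  (forall x, is_R_linear (rho x)) ->
  (forall e, is_R_linear (fun x => rho x e)) ->
  forall x u, Kmap J I rho x u = - Nmap J I rho x (I u).
Proof.
move=> [HI II] Hr He x u; rewrite /Kmap /Nmap /crho /=.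
rewrite !II !(linN (He _)) !(linN (Hr _)) !(linB HI) !(linN HI) !II !opprK.
rewrite !opprD !opprK !addrA.
set p := rho x (I u); set q := rho (J x) u; set r := I (rho x u); set s := I (rho (J x) (I u)).
by rewrite [LHS](ACl (4*2*3*1)).
Qed.

Lemma clin (R : rcfType) (U V : lmodType R) (F G : U -> V) :
  is_R_linear F -> is_R_linear G ->
  forall (c : R[i]) (w z : cpx U),
  (F (cadd (cscale c w) z).1 - G (cadd (cscale c w) z).2,
   F (cadd (cscale c w) z).2 + G (cadd (cscale c w) z).1)
  = cadd (cscale c (F w.1 - G w.2, F w.2 + G w.1)) (F z.1 - G z.2, F z.2 + G z.1).
Proof.
move=> HF HG [al be] [a b] [a' b']; rewrite /cadd /cscale /=.
rewrite !(linD HF) !(linD HG) ?(linN HF) ?(linN HG) !(linZ HF) !(linZ HG).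
rewrite !scalerBr !scalerDr !opprD !addrA.
by congr (_, _); rewrite [LHS](ACl (1*4*2*5*3*6)).
Qed.

Lemma clin2 (R : rcfType) (U V : lmodType R) (F G : U -> V) :
  is_R_linear F -> is_R_linear G ->
  forall (c : R[i]) (w z : cpx U),
  (F (cadd (cscale c w) z).1 - G (cadd (cscale c w) z).2,
   G (cadd (cscale c w) z).1 + F (cadd (cscale c w) z).2)
  = cadd (cscale c (F w.1 - G w.2, G w.1 + F w.2)) (F z.1 - G z.2, G z.1 + F z.2).
Proof.
move=> HF HG [al be] [a b] [a' b']; rewrite /cadd /cscale /=.
rewrite !(linD HF) !(linD HG) ?(linN HF) ?(linN HG) !(linZ HF) !(linZ HG).
rewrite !scalerBr !scalerDr !opprD !addrA.
by congr (_, _); rewrite [LHS](ACl (1*4*5*2*3*6)).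
Qed.

Lemma cbr (R : rcfType) (g E : lmodType R) (br : g -> g -> g) (rho : g -> E -> E) :
  is_representation br rho ->
  forall X Y e, crho rho (cbracket br X Y) e
           = cadd (crho rho X (crho rho Y e)) (cscale (-1) (crho rho Y (crho rho X e))).
Proof.
move=> [Hr He Hb] [x1 x2] [y1 y2] [e1 e2].
have He' : forall e, is_R_linear (fun x => rho x e) by move=> e a x y; exact: He.
rewrite /crho /cbracket /cadd /cscale /=.
rewrite !(linD (He' _)) ?(linN (He' _)) !Hb.
rewrite !(linD (Hr _)) ?(linN (Hr _)) oppr0 !scaleN1r !scale0r !subr0 !addr0.
rewrite !opprD !opprK !addrA.
by congr (_, _); rewrite [LHS](ACl (1*5*7*3*2*8*6*4)).
Qed.

Lemma proj10E (R : rcfType) (E : lmodType R) (I : E -> E) :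
  complex_structure I -> forall w : cpx E,
  proj10 I w = (2%:R^-1 *: (w.1 + I w.2), - I (2%:R^-1 *: (w.1 + I w.2))).
Proof.
move=> [HI II] [a b]; rewrite /proj10 /cadd /cscale /cext /=.
rewrite !oppr0 !scale0r !scaleN1r !subr0 !addr0 add0r opprK sub0r.
rewrite (linZ HI) (linD HI) II -scalerN opprD opprK.
by rewrite [- I a + b]addrC.
Qed.

Lemma proj01_0 (R : rcfType) (E : lmodType R) (I : E -> E) :
  complex_structure I -> forall v : cpx E,
  proj01 I v = czero E <-> v.2 + I v.1 = 0.
Proof.
move=> [HI II] [a b]; rewrite /proj01 /cadd /cscale /cext /czero /=.
rewrite !scale0r !scale1r !subr0 !addr0 sub0r add0r.
have h0 : (2%:R^-1 : R) != 0 by rewrite invr_eq0 pnatr_eq0.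
split.
  move=> H; have := congr1 snd H => /= /eqP; rewrite scaler_eq0 (negbTE h0) /=.
  by move/eqP.
move=> /eqP; rewrite addr_eq0 => /eqP ->.
by rewrite (linN HI) II opprK subrr addrC subrr !scaler0.
Qed.

Theorem mainTheorem2 (R : rcfType) (g E : lmodType R)
  (br : g -> g -> g) (J : g -> g) (I : E -> E) (rho : g -> E -> E) :
  is_lie_bracket br ->
  integrable_cs br J ->
  complex_structure I ->
  is_representation br rho ->
  let TFAE1 := integrable_rep J I rho in
  let TFAE2 := forall X : cpx g, V10 J X ->
                 forall w : cpx E, comp_10_01 I (crho rho X) w = czero E in
  let TFAE3 := forall X : cpx g, V10 J X ->
                 forall e : cpx E, V10 I e -> V10 I (crho rho X e) in
  let TFAE4 :=
    [/\ (forall X : cpx g, V10 J X -> forall e : cpx E, V10 I e -> V10 I (crho rho X e)),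
        (forall (c : R[i]) (X Y : cpx g) (e : cpx E), V10 J X -> V10 J Y -> V10 I e ->
           crho rho (cadd (cscale c X) Y) e
           = cadd (cscale c (crho rho X e)) (crho rho Y e)),
        (forall (X : cpx g) (c : R[i]) (e f : cpx E), V10 J X -> V10 I e -> V10 I f ->
           crho rho X (cadd (cscale c e) f)
           = cadd (cscale c (crho rho X e)) (crho rho X f)) &
        (forall (X Y : cpx g) (e : cpx E), V10 J X -> V10 J Y -> V10 I e ->
           crho rho (cbracket br X Y) e
           = cadd (crho rho X (crho rho Y e)) (cscale (-1) (crho rho Y (crho rho X e))))] in
  (TFAE1 <-> TFAE2) /\ (TFAE2 <-> TFAE3) /\ (TFAE3 <-> TFAE4).
Proof.
move=> _ [JC _] IC Hrep T1 T2 T3 T4.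
case: (JC) => HJ JJ; case: (IC) => HI II; case: (Hrep) => Hr He Hb.
have He' : forall e, is_R_linear (fun x => rho x e) by move=> e a x y; exact: He.
have hX : forall x, V10 J (x, - J x) by move=> x; apply/(V10P _ JC).
have hE : forall u, V10 I (u, - I u) by move=> u; apply/(V10P _ IC).
pose P := forall x u, Kmap J I rho x u = 0.
have A1 : T1 <-> P.
  split.
    by move=> H1 x u; rewrite (KN J IC Hr He') /Nmap H1 oppr0.
  move=> HP x e; have := HP x (- I e).
  by rewrite (KN J IC Hr He') (linN HI) II opprK => /eqP; rewrite oppr_eq0 => /eqP.
have A3 : T3 <-> P.
  split.
    move=> H3 x u; have := H3 _ (hX x) _ (hE u).
    by move/(V10P _ IC) => h; rewrite /Kmap h addNr.
  move=> HP [x1 x2] /(V10P _ JC) /= -> [u1 u2] /(V10P _ IC) /= ->.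
  apply/(V10P _ IC); apply/eqP; rewrite -addr_eq0; apply/eqP; exact: HP x1 u1.
have A2 : T2 <-> P.
  split.
    move=> H2 x u; have := H2 _ (hX x) (u + u, 0).
    rewrite /comp_10_01 (proj10E IC) /= (lin0 HI) addr0.
    have -> : (2%:R^-1 : R) *: (u + u) = u.
      by rewrite -mulr2n -scaler_nat scalerA mulVf ?scale1r // pnatr_eq0.
    by move/(proj01_0 IC).
  move=> HP [x1 x2] /(V10P _ JC) /= -> w.
  rewrite /comp_10_01 (proj10E IC); apply/(proj01_0 IC); exact: HP.
have A4 : T3 <-> T4.
  split; last by case.
  move=> H3; split => //.
  - by move=> c X Y e _ _ _; exact: (clin2 (He' e.1) (He' e.2) c X Y).
  - by move=> X c e f _ _ _; exact: (clin (Hr X.1) (Hr X.2) c e f).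
  - by move=> X Y e _ _ _; exact: cbr.
split; first by rewrite A1 A2.
by split; [rewrite A2 A3 | exact: A4].
Qed.
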